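(* Let $G$ be a finite abelian group of rank $n$ which is not elementary abelian. Then $\tau(G)=n+1$.
   Context: The rank is the minimal number of generators; an elementary abelian group is one isomorphic to $(\mathbb{Z}/p\mathbb{Z})^m$ for a prime $p$. A projective representation of $G$ is an $\alpha$-representation for some cocycle $\alpha$: a map $\rho:G\to\mathrm{GL}_m(\mathbb{C})$ with $\rho(1)=I$ and $\rho(g)\rho(h)=\alpha(g,h)\rho(gh)$; it is faithful if the only $g$ with $\rho(g)$ scalar is $g=1$. $\tau(G)$ is the least degree of a faithful projective representation of $G$. *)

(* Defs.v *)
From HB Require Import structures.
From mathcomp Require Import all_boot all_order all_algebra all_fingroup all_solvable.
From mathcomp Require Import complex Rstruct.
Set Implicit Arguments. Unset Strict Implicit. Unset Printing Implicit Defensive.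
Import GRing.Theory.
Local Open Scope ring_scope.

Definition CC : closedFieldType := complex Rdefinitions.R.

Definition alpha_rep (gT : finGroupType) (G : {group gT}) (m : nat)
    (alpha : gT -> gT -> CC) (rho : gT -> 'M[CC]_m) : Prop :=
  [/\ rho 1%g = 1%:M,
      (forall g, g \in G -> rho g \in unitmx),
      (forall g h, g \in G -> h \in G -> alpha g h != 0) &
      (forall g h, g \in G -> h \in G -> rho g *m rho h = alpha g h *: rho (g * h)%g)].

Definition proj_rep (gT : finGroupType) (G : {group gT}) (m : nat)
    (rho : gT -> 'M[CC]_m) : Prop :=
  exists alpha : gT -> gT -> CC, alpha_rep G alpha rho.

Definition faithful_proj_rep (gT : finGroupType) (G : {group gT}) (m : nat)
    (rho : gT -> 'M[CC]_m) : Prop :=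
  proj_rep G rho /\ (forall g, g \in G -> is_scalar_mx (rho g) -> g = 1%g).

Definition has_faithful_proj_rep (gT : finGroupType) (G : {group gT}) (m : nat) : Prop :=
  exists rho : gT -> 'M[CC]_m, faithful_proj_rep G rho.

Definition is_tau (gT : finGroupType) (G : {group gT}) (t : nat) : Prop :=
  has_faithful_proj_rep G t /\ (forall m, has_faithful_proj_rep G m -> (t <= m)%N).

Definition elementary_abelian (gT : finGroupType) (G : {group gT}) : Prop :=
  exists p, prime p /\ (p.-abelem G)%g.

(* Main.v *)
Require Import Defs.
From HB Require Import structures.
From mathcomp Require Import all_boot all_order all_algebra all_fingroup all_solvable all_field all_character.
From mathcomp Require Import complex Rstruct.
From mathcomp Require Import ring zify.
From Stdlib Require Import Classical.
Set Implicit Arguments. Unset Strict Implicit. Unset Printing Implicit Defensive.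
Import GRing.Theory Num.Theory.
Local Open Scope ring_scope.

Lemma charCC n : (0 < n)%N -> n%:R != 0 :> CC.
Proof. by move=> n0; rewrite /CC pnatr_eq0 -lt0n. Qed.

Definition projrep (gT : finGroupType) (G : {group gT}) m (rho : gT -> 'M[CC]_m) :=
  [/\ rho 1%g = 1%:M, (forall g, g \in G -> rho g \in unitmx) &
      (forall g h, g \in G -> h \in G ->
          exists2 a, a != 0 & rho g *m rho h = a *: rho (g * h)%g)].

Lemma proj_rep_projrep (gT : finGroupType) (G : {group gT}) m (rho : gT -> 'M[CC]_m) :
  proj_rep G rho -> projrep G rho.
Proof.
case=> alpha [r1 ru an rm]; split=> // g h Gg Gh.
by exists (alpha g h); [apply: an | apply: rm].
Qed.

Lemma unit_neq0 m (A : 'M[CC]_m) : (0 < m)%N -> A \in unitmx -> A != 0.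
Proof.
case: m A => // m A _; apply: contraTneq => ->.
by rewrite unitmxE det0 unitr0.
Qed.

Lemma mulmx_unit_neq0 m (A B : 'M[CC]_m) : (0 < m)%N -> A \in unitmx -> B \in unitmx ->
  A *m B != 0.
Proof. by move=> m0 uA uB; apply: unit_neq0 => //; rewrite unitmx_mul uA. Qed.

Lemma scale_cancel m n (A : 'M[CC]_(m, n)) (a b : CC) : A != 0 -> a *: A = b *: A -> a = b.
Proof.
move=> nA e; apply/eqP; rewrite -subr_eq0.
have: (a - b) *: A == 0 by rewrite scalerBl e subrr.
by rewrite scaler_eq0 (negPf nA) orbF.
Qed.

Section Proj.
Variables (gT : finGroupType) (G : {group gT}) (m : nat) (rho : gT -> 'M[CC]_m).
Hypothesis pr : projrep G rho.
Hypothesis m0 : (0 < m)%N.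

Lemma pr_unit g : g \in G -> rho g \in unitmx.
Proof. by case: pr => _ u _; apply: u. Qed.

Lemma pr_neq0 g : g \in G -> rho g != 0.
Proof. by move=> Gg; apply: unit_neq0 => //; apply: pr_unit. Qed.

Lemma pr_exp x k : x \in G -> exists2 b, b != 0 & rho x ^+ k = b *: rho (x ^+ k)%g.
Proof.
move=> Gx; elim: k => [|k [b b0 IH]].
  by exists 1; rewrite ?oner_eq0 // expr0 expg0 scale1r; case: pr.
case: pr => _ _ /(_ x (x ^+ k)%g Gx (groupX k Gx)) [a a0 e].
exists (a * b); first by rewrite mulf_neq0.
by rewrite exprS IH -mulmxE -scalemxAr e scalerA mulrC expgS.
Qed.

End Proj.

Lemma fun2_exists (T : finType) (U : Type) (P : T -> T -> U -> Prop) :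
  (forall x y, exists a, P x y a) -> exists f : T -> T -> U, forall x y, P x y (f x y).
Proof.
move=> H.
have H1 x : exists fx : T -> U, forall y, P x y (fx y) by apply: fin_all_exists.
by have [f Hf] := fin_all_exists H1; exists f.
Qed.

Section Comm.
Variables (gT : finGroupType) (G : {group gT}) (m : nat) (rho : gT -> 'M[CC]_m).
Hypothesis pr : projrep G rho.
Hypothesis m0 : (0 < m)%N.
Hypothesis cG : abelian G.

Lemma comm_exists : exists c : gT -> gT -> CC,
  forall g h, g \in G -> h \in G -> rho g *m rho h = c g h *: (rho h *m rho g).
Proof.
apply: (@fun2_exists _ _ (fun g h a => g \in G -> h \in G -> rho g *m rho h = a *: (rho h *m rho g))) => g h.
case: (boolP (g \in G)) => Gg; last by exists 0.
case: (boolP (h \in G)) => Gh; last by exists 0.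
case: pr => _ _ pm.
have [a a0 ea] := pm g h Gg Gh; have [b b0 eb] := pm h g Gh Gg.
exists (a / b) => _ _; rewrite eb ea scalerA divfK //.
by rewrite (centsP cG).
Qed.

Variable c : gT -> gT -> CC.
Hypothesis Hc : forall g h, g \in G -> h \in G -> rho g *m rho h = c g h *: (rho h *m rho g).

Lemma comm_inv g h : g \in G -> h \in G -> c g h * c h g = 1.
Proof.
move=> Gg Gh; have := Hc Gg Gh; rewrite (Hc Gh Gg) scalerA => e.
apply/esym; apply: (@scale_cancel _ _ (rho g *m rho h)); last by rewrite scale1r {1}e.
exact: mulmx_unit_neq0 (pr_unit pr Gg) (pr_unit pr Gh).
Qed.

Lemma comm_neq0 g h : g \in G -> h \in G -> c g h != 0.
Proof.
by move=> Gg Gh; apply/negP => /eqP c0; have := comm_inv Gg Gh; rewrite c0 mul0r => /eqP; rewrite eq_sym oner_eq0.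
Qed.

Lemma comm_mul1 g1 g2 h : g1 \in G -> g2 \in G -> h \in G ->
  c (g1 * g2)%g h = c g1 h * c g2 h.
Proof.
move=> G1 G2 Gh; case: pr => _ pu pm.
have [a a0 ea] := pm g1 g2 G1 G2.
have e1 : rho g1 *m (rho g2 *m rho h) = (c g1 h * c g2 h) *: (rho h *m rho g1 *m rho g2).
  rewrite (Hc G2 Gh) -scalemxAr mulmxA (Hc G1 Gh) -scalemxAl -mulmxA scalerA mulrC.
  by rewrite mulmxA.
have e2 := Hc (groupM G1 G2) Gh.
rewrite mulmxA ea -mulmxA ea -!scalemxAl -!scalemxAr in e1.
have : (a * c (g1 * g2)%g h) *: (rho h *m rho (g1 * g2)%g) =
       (a * (c g1 h * c g2 h)) *: (rho h *m rho (g1 * g2)%g).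
  by rewrite -!scalerA -e2 e1 !scalerA; congr (_ *: _); rewrite mulrC mulrA.
move/scale_cancel => /(_ (mulmx_unit_neq0 m0 (pu _ Gh) (pu _ (groupM G1 G2)))).
by move/mulfI => /(_ a0).
Qed.

End Comm.

Lemma eig_exists m (A : 'M[CC]_m) : (0 < m)%N -> exists a, eigenvalue A a.
Proof.
move=> m0; have /closed_rootP [a ra] : size (char_poly A) != 1%N.
  by rewrite size_char_poly; case: m A m0.
by exists a; rewrite eigenvalue_root_char.
Qed.

Section Ortho.
Variables (gT : finGroupType) (G : {group gT}) (phi : gT -> CC).
Hypothesis phiM : {in G &, forall x y, phi (x * y)%g = phi x * phi y}.

Lemma sum_char_nontriv h0 : h0 \in G -> phi h0 != 1 -> \sum_(h in G) phi h = 0.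
Proof.
move=> Gh0 ph0; set S := \sum_(h in G) phi h.
have : S = S * phi h0.
  rewrite {1}/S (reindex_acts 'R%act _ Gh0) ?astabsR //= mulr_suml.
  by apply: eq_bigr => h Gh; rewrite phiM.
move/eqP; rewrite -subr_eq0 -{1}(mulr1 S) -mulrBr mulf_eq0 subr_eq0.
by case/orP => [/eqP //|]; rewrite eq_sym (negPf ph0).
Qed.
End Ortho.

Section Irr.
Variables (gT : finGroupType) (G : {group gT}) (m : nat) (rho : gT -> 'M[CC]_m).
Hypothesis pr : projrep G rho.
Hypothesis m0 : (0 < m)%N.
Hypothesis cG : abelian G.
Hypothesis Hf : forall g, g \in G -> is_scalar_mx (rho g) -> g = 1%g.
Hypothesis Hirr : forall U : 'M[CC]_m, (forall g, g \in G -> (U *m rho g <= U)%MS) ->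
  U != 0 -> row_full U.

Lemma central_trivial x : x \in G ->
  (forall g, g \in G -> rho x *m rho g = rho g *m rho x) -> x = 1%g.
Proof.
move=> Gx Hx; have [a ea] := eig_exists (rho x) m0.
set U := eigenspace (rho x) a.
have eU : U *m rho x = a *: U by apply/eigenspaceP.
have Uinv : forall g, g \in G -> (U *m rho g <= U)%MS.
  move=> g Gg; apply/eigenspaceP.
  by rewrite -mulmxA -Hx // mulmxA eU -scalemxAl.
have full := Hirr Uinv ea.
apply: (Hf Gx); have : (1%:M <= U)%MS by apply: submx_full.
move/eigenspaceP; rewrite mul1mx => ->.
by apply/is_scalar_mxP; exists a; rewrite scalemx1.
Qed.

Variable c : gT -> gT -> CC.
Hypothesis Hc : forall g h, g \in G -> h \in G -> rho g *m rho h = c g h *: (rho h *m rho g).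

Lemma comm_distinct g g' : g \in G -> g' \in G -> g != g' ->
  exists2 h, h \in G & c h g != c h g'.
Proof.
move=> Gg Gg' ne; apply/exists_inP; apply: contraR ne => /exists_inPn H.
set x := (g' * g^-1)%g.
have Gx : x \in G by rewrite groupM ?groupV.
have cx1 : forall h, h \in G -> c x h = 1.
  move=> h Gh; have := comm_mul1 pr m0 Hc Gx Gg Gh.
  rewrite /x -mulgA mulVg mulg1 => e.
  have Hh := H h Gh; rewrite negbK in Hh.
  have e1 : c g' h = c g h.
    apply: (mulfI (comm_neq0 pr m0 Hc Gh Gg)).
    by rewrite (comm_inv pr m0 Hc Gh Gg) (eqP Hh) (comm_inv pr m0 Hc Gh Gg').
  move: e; rewrite e1 => e.
  by apply: (mulIf (comm_neq0 pr m0 Hc Gg Gh)); rewrite mul1r -e.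
have x1 : x = 1%g.
  apply: (central_trivial Gx) => h Gh; rewrite (Hc Gx Gh) cx1 // scale1r.
  by [].
by rewrite eq_sym eq_mulgV1 -/x x1.
Qed.

Lemma ortho g g' : g \in G -> g' \in G ->
  \sum_(h in G) c h g / c h g' = (g == g')%:R * #|G|%:R.
Proof.
move=> Gg Gg'; case: (eqVneq g g') => [<-|ne].
  rewrite mul1r (eq_bigr (fun _ => 1)) ?sumr_const //.
  by move=> h Gh; rewrite divff // (comm_neq0 pr m0 Hc Gh Gg).
rewrite mul0r; have [h0 Gh0 ne0] := comm_distinct Gg Gg' ne.
apply: (@sum_char_nontriv _ G (fun h => c h g / c h g') _ h0 Gh0).
  move=> x y Gx Gy /=; rewrite !(comm_mul1 pr m0 Hc) //; rewrite invfM; ring.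
apply: contra ne0 => /eqP e; apply/eqP.
by rewrite -[c h0 g](divfK (comm_neq0 pr m0 Hc Gh0 Gg')) e mul1r.
Qed.

Lemma card_le_sq : (#|G| <= m * m)%N.
Proof.
pose gi (i : 'I_#|G|) : gT := enum_val i.
have Ggi i : gi i \in G := enum_valP i.
pose M := \matrix_(i < #|G|) mxvec (rho (gi i)).
have rf : row_free M.
  apply: inj_row_free => v vM0.
  have S0 : \sum_i v 0 i *: rho (gi i) = 0.
    have : v *m M = mxvec (\sum_i v 0 i *: rho (gi i)).
      rewrite mulmx_sum_row linear_sum; apply: eq_bigr => i _.
      by rewrite linearZ /= rowK.
    by rewrite vM0 => /esym/eqP; rewrite mxvec_eq0 => /eqP.
  have S1 h : h \in G -> \sum_i (v 0 i * c h (gi i)) *: rho (gi i) = 0.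
    move=> Gh.
    have : rho h *m (\sum_i v 0 i *: rho (gi i)) =
           (\sum_i (v 0 i * c h (gi i)) *: rho (gi i)) *m rho h.
      rewrite mulmx_suml mulmx_sumr; apply: eq_bigr => i _.
      by rewrite -scalemxAl -scalemxAr (Hc Gh (Ggi i)) scalerA.
    rewrite S0 mulmx0 => /esym.
    by move/(congr1 (mulmx^~ (invmx (rho h)))); rewrite mul0mx mulmxK // (pr_unit pr Gh).
  apply/rowP => j; rewrite mxE.
  have S2 : \sum_i (v 0 i * \sum_(h in G) c h (gi i) / c h (gi j)) *: rho (gi i) = 0.
    transitivity (\sum_(h in G) (c h (gi j))^-1 *: \sum_i (v 0 i * c h (gi i)) *: rho (gi i)); last first.
      by rewrite big1 // => h Gh; rewrite S1 ?scaler0.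
    under [RHS]eq_bigr do rewrite scaler_sumr.
    rewrite exchange_big /=; apply: eq_bigr => i _.
    rewrite mulr_sumr scaler_suml; apply: eq_bigr => h _; rewrite scalerA.
    by congr (_ *: _); ring.
  move: S2; under eq_bigr => i _ do rewrite (ortho (Ggi i) (Ggi j)).
  rewrite (bigD1 j) //= big1 ?addr0; last first.
    move=> i ne; rewrite (inj_eq enum_val_inj) (negPf ne) mul0r mulr0.
    by rewrite scale0r.
  rewrite eqxx mul1r => /eqP; rewrite scaler_eq0 mulf_eq0.
  rewrite (negPf (pr_neq0 pr m0 (Ggi j))) orbF (negPf (charCC (cardG_gt0 G))) orbF.
  by move/eqP.
by rewrite -(eqP rf) rank_leq_col.
Qed.

End Irr.

Lemma sq_lt_pow2 m : (m * m < 2 ^ m.+1)%N.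
Proof.
elim: m => // m IH.
have h1 : (m < 2 ^ m)%N by apply: ltn_expl.
rewrite !expnS in IH *; nia.
Qed.

Lemma rank_case (gT : finGroupType) (G : {group gT}) m :
  (#|G| <= m * m)%N -> (('r(G))%g < m)%N \/ (elementary_abelian G /\ (('r(G))%g <= m)%N).
Proof.
move=> Gm; have [p pp ->] := rank_witness G.
have [E /pnElemP [sEG abE lE]] := p_rank_witness p G.
have cE : #|E| = (p ^ ('r_p(G))%g)%N by rewrite -lE -card_pgroup // (abelem_pgroup abE).
have dv : (p ^ ('r_p(G))%g %| #|G|)%N by rewrite -cE cardSg.
set r := ('r_p(G))%g in cE dv *.
have p2 : (2 <= p)%N by apply: prime_gt1.
have le2 : (2 ^ r <= p ^ r)%N by case: (r) => // r0; rewrite leq_exp2r.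
have leG : (p ^ r <= #|G|)%N by apply: dvdn_leq.
have := sq_lt_pow2 m => lt.
have rm : (r <= m)%N.
  rewrite leqNgt; apply/negP => rm.
  have : (2 ^ m.+1 <= 2 ^ r)%N by rewrite leq_exp2l.
  lia.
case: (ltngtP r m) => [rlt|//|req]; [by left | by lia | right].
split; last by lia.
have eG : #|G| = (p ^ r)%N.
  case/dvdnP: dv => k ek; rewrite ek.
  have k0 : (0 < k)%N by move: (cardG_gt0 G); rewrite ek muln_gt0 => /andP[].
  suff : k = 1%N by move=> ->; rewrite mul1n.
  apply/eqP; rewrite eqn_leq k0 andbT leqNgt; apply/negP => k2.
  have := leq_mul k2 le2; rewrite -ek.
  move: lt; rewrite -req expnS; lia.
have EG : E :=: G by apply/eqP; rewrite eqEcard sEG cE eG leqnn.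
by exists p; split=> //; rewrite -EG.
Qed.

Definition noncomm (gT : finGroupType) (G : {group gT}) m (rho : gT -> 'M[CC]_m) :=
  exists g h, [/\ g \in G, h \in G & rho g *m rho h != rho h *m rho g].

Lemma irr_case (gT : finGroupType) (G : {group gT}) m (rho : gT -> 'M[CC]_m) :
  projrep G rho -> (0 < m)%N -> abelian G ->
  (forall g, g \in G -> is_scalar_mx (rho g) -> g = 1%g) ->
  (forall U : 'M[CC]_m, (forall g, g \in G -> (U *m rho g <= U)%MS) -> U != 0 -> row_full U) ->
  (('r(G))%g < m)%N \/ [/\ elementary_abelian G, (('r(G))%g <= m)%N & noncomm G rho].
Proof.
move=> pr m0 cG Hf Hirr.
have [c Hc] := comm_exists pr cG.
case: (rank_case (card_le_sq pr m0 Hf Hirr Hc)) => [-> | [el le]]; first by left.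
case: (ltnP ('r(G))%g m) => [lt|ge]; first by left.
right; split=> //.
have : (0 < ('r(G))%g)%N by apply: leq_trans ge.
rewrite rank_gt0 => /trivgPn [x Gx nx].
have : ~~ [forall g in G, rho x *m rho g == rho g *m rho x].
  apply/negP => /forall_inP H; move/eqP: nx; apply.
  by apply: (central_trivial m0 Hf Hirr Gx) => g Gg; apply/eqP/H.
rewrite negb_forall_in => /exists_inP [g Gg ng].
by exists x, g.
Qed.

Section FM.
Variables (m : nat) (V : 'M[CC]_m).
Local Notation e := (\rank (cokermx V)).
Definition fm (A : 'M[CC]_m) : 'M[CC]_e := in_factmod V (@val_factmod _ _ V _ 1%:M *m A).
Definition sm (A : 'M[CC]_m) : 'M[CC]_(\rank V) := in_submod V (@val_submod _ _ V _ 1%:M *m A).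

Lemma in_factmodJ' k (W : 'M_(k, m)) A : (V *m A <= V)%MS ->
  in_factmod V (W *m A) = in_factmod V W *m fm A.
Proof.
move=> sA; rewrite -{1}[W](add_sub_fact_mod V) mulmxDl linearD /=.
apply: (canLR (subrK _)); apply: etrans (_ : 0 = _).
  apply/eqP; rewrite in_factmod_eq0 (submx_trans _ sA) //.
  by rewrite submxMr ?val_submodP.
by rewrite /fm /in_factmod /val_factmod /= !mulmxA mulmx1 ?subrr.
Qed.

Lemma fmM A B : (V *m B <= V)%MS -> fm (A *m B) = fm A *m fm B.
Proof. by move=> sB; rewrite {1}/fm mulmxA in_factmodJ'. Qed.

Lemma fm1 : fm 1%:M = 1%:M.
Proof. by rewrite /fm mulmx1 val_factmodK. Qed.

Lemma fmZ a A : fm (a *: A) = a *: fm A.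
Proof. by rewrite /fm -scalemxAr linearZ. Qed.

Lemma fmB A B : fm (A - B) = fm A - fm B.
Proof. by rewrite /fm mulmxBr linearB. Qed.

Lemma fm_scalar a : fm a%:M = a%:M.
Proof. by rewrite -scalemx1 fmZ fm1 scalemx1. Qed.

Lemma fm0_sub A : (V *m A <= V)%MS -> fm A = 0 -> (A <= V)%MS.
Proof.
move=> sA fA0; rewrite -[A]mul1mx -{1}(add_sub_fact_mod V 1%:M) mulmxDl.
apply: addmx_sub.
  by rewrite (submx_trans _ sA) // submxMr ?val_submodP.
rewrite val_factmodE -mulmxA (submx_trans (submxMl _ _)) //.
by rewrite -in_factmod_eq0; apply/eqP.
Qed.

Lemma val_sm k (u : 'M_(k, \rank V)) A : (V *m A <= V)%MS ->
  val_submod (u *m sm A) = val_submod u *m A.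
Proof.
move=> sA; rewrite /sm val_submodE -mulmxA -val_submodE in_submodK.
  by rewrite mulmxA -val_submodE.
by rewrite (submx_trans _ sA) // submxMr ?val_submodP.
Qed.

Lemma coker_rank : e = (m - \rank V)%N.
Proof. by rewrite mxrank_coker. Qed.

End FM.

Lemma scalar_cancel n (a b : CC) : (0 < n)%N -> (a%:M : 'M[CC]_n) = b%:M -> a = b.
Proof.
move=> n0 e; apply: (@scale_cancel n n 1%:M); last by rewrite !scalemx1 e.
by case: n {e} n0 => // n _; rewrite oner_neq0.
Qed.

Lemma unit_scalar_neq0 n (a : CC) : (0 < n)%N -> (a%:M : 'M[CC]_n) \in unitmx -> a != 0 :> CC.
Proof.
move=> n0; apply: contraTneq => ->; rewrite unitmxE det_scalar.
by case: n n0 => // n _; rewrite expr0n /= unitr0.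
Qed.

Lemma nil_pow n (a : CC) (M : 'M[CC]_n) : M *m M = 0 -> forall k,
  (a%:M + M) ^+ k.+1 = (a ^+ k.+1)%:M + (k.+1%:R * a ^+ k) *: M.
Proof.
move=> MM; elim=> [|k IH]; first by rewrite expr1 expr1 expr0 mul1r scale1r.
rewrite exprS IH -mulmxE mulmxDl !mulmxDr -scalar_mxM -scalemxAr.
rewrite -scalemxAr MM scaler0 addr0 scalar_mxC !mul_scalar_mx scalerA -exprS.
rewrite -addrA; congr (_ + _); rewrite -scalerDl; congr (_ *: _).
rewrite [a ^+ k.+1]exprS -[k.+2]addn1 natrD; ring.
Qed.

Section Red.
Variables (gT : finGroupType) (G : {group gT}) (m : nat) (rho : gT -> 'M[CC]_m).
Hypotheses (pr : projrep G rho) (m0 : (0 < m)%N) (cG : abelian G).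
Hypothesis Hf : forall g, g \in G -> is_scalar_mx (rho g) -> g = 1%g.
Variable V : 'M[CC]_m.
Hypothesis Vinv : forall g, g \in G -> (V *m rho g <= V)%MS.
Hypothesis V0 : V != 0.
Hypothesis Vnf : (\rank V < m)%N.
Hypothesis Vmin : forall U : 'M[CC]_m, (forall g, g \in G -> (U *m rho g <= U)%MS) ->
  U != 0 -> (U <= V)%MS -> (V <= U)%MS.

Local Notation e := (\rank (cokermx V)).
Definition rW g := fm V (rho g).

Lemma rV_gt0 : (0 < \rank V)%N.
Proof. by rewrite lt0n mxrank_eq0. Qed.

Lemma e_gt0 : (0 < e)%N.
Proof. by rewrite coker_rank subn_gt0. Qed.

Lemma e_lt : (e < m)%N.
Proof. have := rV_gt0; rewrite coker_rank; lia. Qed.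

Lemma rW_pr : projrep G rW.
Proof.
case: pr => p1 pu pm; split.
- by rewrite /rW p1 fm1.
- move=> g Gg; have Gi : (g^-1)%g \in G by rewrite groupV.
  have [a a0 ea] := pm g _ Gg Gi.
  have : rW g *m (a^-1 *: rW g^-1) = 1%:M.
    rewrite -scalemxAr /rW -fmM ?Vinv // ea mulgV p1 fmZ fm1 scalerA mulVf //.
    by rewrite scale1r.
  by case/mulmx1_unit.
- move=> g h Gg Gh; have [a a0 ea] := pm g h Gg Gh.
  by exists a => //; rewrite /rW -fmM ?Vinv // ea fmZ.
Qed.

Lemma rW_neq0 g : g \in G -> rW g != 0.
Proof. by move=> Gg; apply: (pr_neq0 rW_pr e_gt0 Gg). Qed.

Lemma rW_scalar_comm x : x \in G -> is_scalar_mx (rW x) ->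
  forall g, g \in G -> rho x *m rho g = rho g *m rho x.
Proof.
move=> Gx /is_scalar_mxP [mu emu] g Gg.
have [c Hc] := comm_exists pr cG.
have mu0 : mu != 0.
  by apply: (@unit_scalar_neq0 e) => //; [apply: e_gt0 | rewrite -emu (pr_unit rW_pr Gx)].
have e1 := Hc x g Gx Gg.
have e2 : rW x *m rW g = c x g *: (rW g *m rW x).
  by rewrite /rW -!fmM ?Vinv // e1 fmZ.
rewrite emu mul_scalar_mx mul_mx_scalar scalerA in e2.
have : c x g = 1.
  apply: (mulIf mu0); rewrite mul1r; apply/esym.
  by apply: (scale_cancel (rW_neq0 Gg)); rewrite e2 mulrC.
by move=> c1; rewrite e1 c1 scale1r.
Qed.

Lemma lam_exists x : x \in G -> (forall g, g \in G -> rho x *m rho g = rho g *m rho x) ->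
  exists lam, V *m rho x = lam *: V.
Proof.
move=> Gx cx.
have [lam /eigenvalueP [u eu u0]] := eig_exists (sm V (rho x)) rV_gt0.
set w := val_submod u.
have w0 : w != 0 by rewrite val_submod_eq0.
have wV : (w <= V)%MS by apply: val_submodP.
have wx : w *m rho x = lam *: w by rewrite -val_sm ?Vinv // eu linearZ.
set U := (V :&: eigenspace (rho x) lam)%MS.
have Ux : U *m rho x = lam *: U by apply/eigenspaceP; apply: capmxSr.
have Uinv : forall g, g \in G -> (U *m rho g <= U)%MS.
  move=> g Gg; rewrite sub_capmx; apply/andP; split.
    by rewrite (submx_trans _ (Vinv Gg)) // submxMr // capmxSl.
  by apply/eigenspaceP; rewrite -mulmxA -cx // mulmxA Ux -scalemxAl.
have U0 : U != 0.
  apply/eqP => U0; move/eqP: w0; apply; apply/eqP; rewrite -submx0 -U0 sub_capmx wV /=.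
  by apply/eigenspaceP.
have VU := Vmin Uinv U0 (capmxSl _ _).
exists lam; apply/eigenspaceP; exact: (submx_trans VU (capmxSr _ _)).
Qed.

Definition Nset := [set x in G | is_scalar_mx (rW x)].

Lemma Nset_group : group_set Nset.
Proof.
apply/group_setP; split.
  by rewrite inE group1 /rW; case: pr => -> _ _; rewrite fm1 scalar_mx_is_scalar.
move=> x y; rewrite !inE => /andP[Gx /is_scalar_mxP [a ea]] /andP[Gy /is_scalar_mxP [b eb]].
rewrite groupM //=; case: rW_pr => _ _ /(_ x y Gx Gy) [c c0 ec].
apply/is_scalar_mxP; exists ((a * b) / c).
rewrite -[rW (x * y)%g]scale1r -(mulVf c0) -scalerA -ec ea eb -scalar_mxM.
by rewrite scale_scalar_mx mulrC.
Qed.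

Definition N := Group Nset_group.

Lemma memN x : (x \in N) = (x \in G) && is_scalar_mx (rW x).
Proof. by rewrite inE. Qed.

Lemma NG : N \subset G.
Proof. by apply/subsetP => x; rewrite memN => /andP[]. Qed.

Lemma lamu : exists lam : gT -> CC, exists mu : gT -> CC, forall x, x \in N ->
  V *m rho x = lam x *: V /\ rW x = (mu x)%:M.
Proof.
have H x : exists p : CC * CC, x \in N -> V *m rho x = p.1 *: V /\ rW x = (p.2)%:M.
  case: (boolP (x \in N)) => Nx; last by exists (0, 0).
  move: (Nx); rewrite memN => /andP[Gx sx].
  have [lam el] := lam_exists Gx (rW_scalar_comm Gx sx).
  have [mu emu] := is_scalar_mxP sx.
  by exists (lam, mu).
have [f Hf'] := fin_all_exists H.
by exists (fun x => (f x).1), (fun x => (f x).2).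
Qed.

Variables (lam mu : gT -> CC).
Hypothesis Hlm : forall x, x \in N -> V *m rho x = lam x *: V /\ rW x = (mu x)%:M.

Lemma NG' x : x \in N -> x \in G.
Proof. by rewrite memN => /andP[]. Qed.

Lemma mu_neq0 x : x \in N -> mu x != 0.
Proof.
move=> Nx; apply: (@unit_scalar_neq0 e) => //; first exact: e_gt0.
by case: (Hlm Nx) => _ <-; apply: (pr_unit rW_pr (NG' Nx)).
Qed.

Lemma lam_neq0 x : x \in N -> lam x != 0.
Proof.
move=> Nx; apply/eqP => l0; move/eqP: V0; apply.
case: (Hlm Nx) => el _; rewrite l0 scale0r in el.
by rewrite -[V](mulmxK (pr_unit pr (NG' Nx))) el mul0mx.
Qed.

Lemma lamu_mul x y : x \in N -> y \in N ->
  exists2 a, a != 0 & lam x * lam y = a * lam (x * y)%g /\ mu x * mu y = a * mu (x * y)%g.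
Proof.
move=> Nx Ny; have Nxy := groupM Nx Ny.
case: pr => _ _ /(_ x y (NG' Nx) (NG' Ny)) [a a0 ea].
exists a => //; case: (Hlm Nx) => lx mx; case: (Hlm Ny) => ly my.
case: (Hlm Nxy) => lxy mxy; split.
  have h : V *m (rho x *m rho y) = (lam x * lam y) *: V.
    by rewrite mulmxA lx -scalemxAl ly scalerA.
  rewrite ea -scalemxAr lxy scalerA in h.
  by apply: (scale_cancel V0); rewrite -h.
apply: (scalar_cancel e_gt0); rewrite scalar_mxM -mx -my -scale_scalar_mx -mxy.
by rewrite /rW -fmM ?Vinv ?(NG' Ny) // ea fmZ.
Qed.

Definition f x := lam x / mu x.

Lemma f_morph : {in N &, {morph f : x y / (x * y)%g >-> x * y}}.
Proof.
move=> x y Nx Ny /=; have [a a0 [el em]] := lamu_mul Nx Ny.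
have mxy0 := mu_neq0 (groupM Nx Ny).
have mx0 := mu_neq0 Nx; have my0 := mu_neq0 Ny.
rewrite /f; apply: (mulIf mxy0); rewrite divfK //.
have -> : mu (x * y)%g = mu x * mu y / a by rewrite em mulrC mulKf.
apply: (mulfI a0); rewrite -el; field.
by rewrite mx0 my0 a0.
Qed.

Lemma f_one x : x \in N -> f x = 1 <-> x = 1%g.
Proof.
move=> Nx; split => [fx1|->]; last first.
  have N1 : (1%g : gT) \in N by apply: group1.
  have [l1 m1] := Hlm N1; case: pr l1 m1 => p1 _ _; rewrite /rW p1 mulmx1 fm1 => l1 m1.
  rewrite /f.
  have -> : lam 1%g = 1 by apply: (scale_cancel V0); rewrite -l1 scale1r.
  have -> : mu 1%g = 1 by apply/esym; apply: (scalar_cancel e_gt0).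
  by rewrite divr1.
have Gx := NG' Nx; set l := lam x.
have lm : mu x = l by rewrite /l; apply/esym; apply: (divr1_eq); exact: fx1.
pose M := rho x - l%:M.
have VM : V *m M = 0 by case: (Hlm Nx) => el _; rewrite mulmxBr el mul_mx_scalar subrr.
have fM : fm V M = 0 by rewrite fmB fm_scalar -/(rW x); case: (Hlm Nx) => _ ->; rewrite lm subrr.
have MV : (M <= V)%MS by apply: fm0_sub => //; rewrite VM sub0mx.
have MM : M *m M = 0 by case/submxP: MV => D eD; rewrite {1}eD -mulmxA VM mulmx0.
have ex : rho x = l%:M + M by rewrite /M addrC subrK.
clearbody M.
have [b b0 eb] := pr_exp pr #[x]%g Gx.
rewrite expg_order in eb; case: pr eb => p1 _ _; rewrite p1 scalemx1 => eb.
have ox := order_gt0 x; move: eb; rewrite ex.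
case ek: #[x]%g ox => [//|k] _; rewrite nil_pow //.
set K := (k.+1%:R * l ^+ k).
have K0 : K != 0 by rewrite mulf_neq0 ?charCC ?expf_neq0 ?lam_neq0.
move=> eb.
have eM : M = ((b - l ^+ k.+1) / K)%:M.
  apply: (scalerI K0); rewrite scale_scalar_mx mulrC divfK //.
  by rewrite raddfB /= -eb addrC addKr.
have g0 : (b - l ^+ k.+1) / K = 0.
  have : ((b - l ^+ k.+1) / K) * ((b - l ^+ k.+1) / K) = 0.
    by apply: (scalar_cancel m0); rewrite scalar_mxM -eM MM raddf0.
  by move/eqP; rewrite mulf_eq0 orbb => /eqP.
apply: (Hf Gx); rewrite ex eM g0 raddf0 addr0; exact: scalar_mx_is_scalar.
Qed.

Lemma N_cyclic : cyclic N.
Proof. exact: (field_mul_group_cyclic f_morph f_one). Qed.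

Lemma GnN : (G \subset 'N(N))%g.
Proof. exact: sub_abelian_norm cG NG. Qed.

Definition rQ (X : coset_of N) : 'M[CC]_e := rW (repr X).

Lemma repr_quo X : X \in (G / N)%g -> repr X \in G.
Proof.
case/morphimP => x Nx Gx ->.
have := mem_repr_coset (coset N x); rewrite val_coset // => /rcosetP [n Nn ->].
by rewrite groupM // (subsetP NG).
Qed.

Lemma rQ_pr : projrep ((G / N)%g) rQ.
Proof.
have [p1 pu pm] := rW_pr.
split.
- by rewrite /rQ repr_coset1.
- by move=> X QX; apply: pu; apply: repr_quo.
move=> X Y QX QY; set x := repr X; set y := repr Y.
have Gx : x \in G := repr_quo QX; have Gy : y \in G := repr_quo QY.
have eXY : (X * Y)%g = coset N (x * y)%g.
  by rewrite morphM ?(subsetP GnN) //= /x /y !coset_reprK.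
have zin : repr (X * Y)%g \in (N :* (x * y))%g.
  rewrite -val_coset ?(subsetP GnN) ?groupM // -eXY; exact: mem_repr_coset.
case/rcosetP: zin => n Nn ez.
have Gn : n \in G := NG' Nn.
move: (Nn); rewrite memN => /andP [_ /is_scalar_mxP [mun emun]].
have [a a0 ea] := pm x y Gx Gy.
have [b b0 eb] := pm n (x * y)%g Gn (groupM Gx Gy).
have mun0 : mun != 0.
  by apply: (@unit_scalar_neq0 e) => //; [apply: e_gt0 | rewrite -emun pu].
exists (a * b / mun).
  by rewrite mulf_neq0 ?invr_eq0 // mulf_neq0.
rewrite /rQ -/x -/y ea ez.
have ez' : rW (n * (x * y))%g = (mun / b) *: rW (x * y)%g.
  apply: (scalerI b0); rewrite -eb emun mul_scalar_mx scalerA mulrC divfK //.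
rewrite ez' scalerA; congr (_ *: _); field.
by rewrite b0 mun0.
Qed.

Lemma rQ_faith X : X \in (G / N)%g -> is_scalar_mx (rQ X) -> X = 1%g.
Proof.
move=> QX sX; have NX : repr X \in N by rewrite memN repr_quo.
by rewrite -(coset_reprK X) coset_id.
Qed.

Lemma rank_bound : (('r(G))%g <= ('r((G / N)%g))%g + 1)%N.
Proof.
have [p pp ->] := rank_witness G.
have h1 : (('r_p(G))%g - ('r_p(N))%g <= ('r_p((G / N)%g))%g)%N := p_rank_quotient p GnN.
have h2 : (('r_p((G / N)%g))%g <= ('r((G / N)%g))%g)%N := p_rank_le_rank p _.
have h3 : (('r_p(N))%g <= 1)%N.
  apply: leq_trans (p_rank_le_rank p N) _.
  by rewrite -abelian_rank1_cyclic ?cyclic_abelian // N_cyclic.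
lia.
Qed.

Lemma noncomm_lift : noncomm ((G / N)%g) rQ -> noncomm G rho.
Proof.
case=> X [Y [QX QY ne]]; exists (repr X), (repr Y); split; rewrite ?repr_quo //.
apply: contra ne => /eqP ee; apply/eqP.
by rewrite /rQ /rW -!fmM ?Vinv ?repr_quo // ee.
Qed.

Lemma rank1_comm : \rank V = 1%N -> forall g h, g \in G -> h \in G ->
  rho g *m rho h = rho h *m rho g.
Proof.
move=> rV1 g h Gg Gh.
set w := nz_row V.
have w0 : w != 0 by rewrite nz_row_eq0.
have wV : (w <= V)%MS := nz_row_sub V.
have ee := (mxrank_leqif_eq wV).2.
have /andP[_ Vw] : (w == V)%MS by rewrite -ee rank_rV w0 rV1.
have kex u : u \in G -> exists2 k, k != 0 & w *m rho u = k *: w.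
  move=> Gu; have : (w *m rho u <= w)%MS.
    by apply: submx_trans Vw; apply: submx_trans (Vinv Gu); rewrite submxMr.
  case/sub_rVP => k ek; exists k => //; apply/eqP => k0; move/eqP: w0; apply.
  by rewrite -[w](mulmxK (pr_unit pr Gu)) ek k0 scale0r mul0mx.
have [kg kg0 ekg] := kex g Gg; have [kh kh0 ekh] := kex h Gh.
have [c Hc] := comm_exists pr cG.
have ec := Hc g h Gg Gh.
have : w *m (rho g *m rho h) = w *m (c g h *: (rho h *m rho g)) by rewrite ec.
rewrite -scalemxAr !mulmxA ekg ekh -!scalemxAl ekh ekg !scalerA => h1.
have c1 : c g h = 1.
  apply: (mulIf (mulf_neq0 kh0 kg0)); rewrite mul1r; apply/esym.
  apply: (scale_cancel w0); rewrite [kh * kg]mulrC h1; congr (_ *: _); ring.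
by rewrite ec c1 scale1r.
Qed.

Lemma red_case :
  (forall (gT' : finGroupType) (H : {group gT'}) (sigma : gT' -> 'M[CC]_e),
    projrep H sigma -> (0 < e)%N -> abelian H ->
    (forall g, g \in H -> is_scalar_mx (sigma g) -> g = 1%g) ->
    (('r(H))%g < e)%N \/ [/\ elementary_abelian H, (('r(H))%g <= e)%N & noncomm H sigma]) ->
  (('r(G))%g < m)%N.
Proof.
move=> IH.
have := IH _ _ rQ rQ_pr e_gt0 (quotient_abelian N cG) rQ_faith.
have rb := rank_bound; have el := e_lt; have cr := coker_rank V.
case => [lt | [_ le nc]].
  by have lt' : (('r((G / N)%g))%g < e)%N := lt; lia.
have le' : (('r((G / N)%g))%g <= e)%N := le.
have [g [h [Gg Gh ne]]] := noncomm_lift nc.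
have r2 : (2 <= \rank V)%N.
  have := rV_gt0; case ev: (\rank V) => [//|[|k]] // _.
  by move: ne; rewrite (rank1_comm ev Gg Gh) eqxx.
lia.
Qed.

End Red.


Lemma min_inv (gT : finGroupType) (G : {group gT}) m (rho : gT -> 'M[CC]_m) :
  forall k (U : 'M[CC]_m), (\rank U <= k)%N ->
  (forall g, g \in G -> (U *m rho g <= U)%MS) -> U != 0 -> ~~ row_full U ->
  exists V : 'M[CC]_m, [/\ (forall g, g \in G -> (V *m rho g <= V)%MS), V != 0,
    (\rank V < m)%N &
    (forall U : 'M[CC]_m, (forall g, g \in G -> (U *m rho g <= U)%MS) ->
        U != 0 -> (U <= V)%MS -> (V <= U)%MS)].
Proof.
elim=> [|k IHk] U rU Ui U0 Unf.
  by move: U0; rewrite -mxrank_eq0; move: rU; rewrite leqn0 => ->.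
case: (classic (exists U' : 'M[CC]_m, [/\ (forall g, g \in G -> (U' *m rho g <= U')%MS),
    U' != 0, (U' <= U)%MS & ~~ (U <= U')%MS])) => [[U' [U'i U'0 sU'U nsUU']] | nQ].
  apply: (IHk U') => //.
    have : (U' < U)%MS by rewrite ltmxE sU'U.
    rewrite ltmxErank => /andP[_ lt]; rewrite -ltnS; exact: leq_trans lt rU.
  by apply: contra nsUU' => fU'; apply: submx_full.
exists U; split=> //.
  by rewrite ltn_neqAle rank_leq_col andbT.
move=> U' U'i U'0 sU'U; apply/negPn/negP => ns; apply: nQ.
by exists U'.
Qed.

Theorem claim m : forall (gT : finGroupType) (G : {group gT}) (rho : gT -> 'M[CC]_m),
  projrep G rho -> (0 < m)%N -> abelian G ->
  (forall g, g \in G -> is_scalar_mx (rho g) -> g = 1%g) ->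
  (('r(G))%g < m)%N \/ [/\ elementary_abelian G, (('r(G))%g <= m)%N & noncomm G rho].
Proof.
elim/ltn_ind: m => m IHm gT G rho pr m0 cG Hf.
case: (classic (exists U : 'M[CC]_m, [/\ (forall g, g \in G -> (U *m rho g <= U)%MS),
    U != 0 & ~~ row_full U])) => [[U [Ui U0 Unf]] | nP].
  have [V [Vi V0 Vnf Vmin]] := min_inv (leqnn _) Ui U0 Unf.
  have [lam [mu Hlm]] := lamu pr cG Vi V0 Vnf Vmin.
  left; apply: (@red_case _ _ _ _ pr m0 cG Hf V Vi V0 Vnf lam mu Hlm).
  move=> gT' H sigma prs e0 cH Hfs.
  exact: (IHm _ (e_lt m0 cG V0 Vnf)).
apply: irr_case => // U Ui U0; apply/negPn/negP => nf; apply: nP.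
by exists U.
Qed.

Lemma prim_exists n : (0 < n)%N -> exists z : CC, n.-primitive_root z.
Proof.
move=> n_gt0.
pose p : {poly CC} := 'X^n - 1; have [r Dp] := closed_field_poly_normal p.
rewrite (monicP _) ?monicXnsubC // scale1r in Dp.
have rn1: all n.-unity_root r by apply/allP=> z; rewrite -root_prod_XsubC -Dp.
have sz_r: (n < (size r).+1)%N.
  by rewrite -(size_prod_XsubC r id) -Dp size_XnsubC.
have [|z] := hasP (has_prim_root n_gt0 rn1 _ sz_r); last by exists z.
by rewrite -separable_prod_XsubC -Dp separable_Xn_sub_1 // charCC.
Qed.

Section Cyc.
Variables (gT : finGroupType) (x : gT) (z : CC).
Hypothesis pz : (#[x]%g).-primitive_root z.

Definition psi (y : gT) : CC :=
  if [pick i : 'I_#[x]%g | (x ^+ i)%g == y] is Some i then z ^+ i else 1.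

Lemma psi_exp k : psi (x ^+ k)%g = z ^+ k.
Proof.
rewrite /psi; case: pickP => [i /eqP ei | none].
  rewrite -(prim_expr_mod pz) -[in RHS](prim_expr_mod pz); congr (_ ^+ _).
  by apply/eqP; rewrite -eq_expg_mod_order ei.
have lt : (k %% #[x]%g < #[x]%g)%N by rewrite ltn_mod order_gt0.
by have := none (Ordinal lt); rewrite /= expg_mod_order eqxx.
Qed.

Lemma z_neq0 : z != 0.
Proof.
apply/eqP => z0; have := prim_expr_order pz; rewrite z0 expr0n.
by case: (#[x]%g) (order_gt0 x) => // n _ /eqP; rewrite eq_sym oner_eq0.
Qed.

Lemma psiM u v : u \in <[x]>%g -> v \in <[x]>%g -> psi (u * v)%g = psi u * psi v.
Proof.
case/cycleP => a -> /cycleP [b ->]; by rewrite -expgD !psi_exp exprD.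
Qed.

Lemma psi_neq0 u : u \in <[x]>%g -> psi u != 0.
Proof. by case/cycleP => a ->; rewrite psi_exp expf_neq0 // z_neq0. Qed.

Lemma psi_faith u : u \in <[x]>%g -> psi u = 1 -> u = 1%g.
Proof.
case/cycleP => a ->; rewrite psi_exp => /eqP; rewrite -(prim_order_dvd pz).
by rewrite order_dvdn => /eqP.
Qed.

End Cyc.

Definition chid (gT : finGroupType) : gT -> CC := fun _ => 1.

Definition goodchars (gT : finGroupType) (A : {set gT}) (cs : seq (gT -> CC)) :=
  [/\ (forall i, (i < size cs)%N -> forall g h, g \in A -> h \in A ->
          nth (@chid gT) cs i (g * h)%g = nth (@chid gT) cs i g * nth (@chid gT) cs i h),
      (forall i, (i < size cs)%N -> forall g, g \in A -> nth (@chid gT) cs i g != 0) &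
      (forall g, g \in A -> (forall i, (i < size cs)%N -> nth (@chid gT) cs i g = 1) -> g = 1%g)].

Lemma chars_exist (gT : finGroupType) (b : seq gT) (G : {group gT}) :
  (\big[dprod/1]_(x <- b) <[x]>)%g = G ->
  exists cs, size cs = size b /\ goodchars G cs.
Proof.
elim: b G => [|x b IH] G.
  rewrite big_nil => <-; exists [::]; split=> //; split=> // g.
  by rewrite inE => /eqP.
rewrite big_cons => defG.
have [[K H eK eB] mKH cKH tiKH] := dprodP defG.
have [cs [scs [cM cN cF]]] := IH H eB.
have [z pz] := prim_exists (order_gt0 x).
have cplH : (H \in [complements to <[x]> in G])%g.
  by apply/complP; rewrite -eB.
have nK : (<[x]> <| G)%g by case: (dprod_normal2 defG).
have mG : (<[x]> * H = G)%g by rewrite -eB.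
have tiG : (<[x]> :&: H = 1)%g by rewrite -eB.
have cG : (H \subset 'C(<[x]>))%g by rewrite -eB.
pose d g := divgr <[x]>%g H g.
pose r g := remgr <[x]>%g H g.
have dM : {in G &, {morph d : u v / (u * v)%g}} by apply: divgrM.
have rM : {in G &, {morph r : u v / (u * v)%g}} by apply: remgrM.
have dK g : g \in G -> d g \in <[x]>%g by move=> Gg; apply: mem_divgr; rewrite mG.
have rH g : g \in G -> r g \in H by move=> Gg; apply: mem_remgr; rewrite mG.
exists ((fun g => psi x z (d g)) :: [seq (fun g => chi (r g)) | chi <- cs]).
split; first by rewrite /= size_map scs.
split.
- case=> [|i] /=; rewrite ?size_map => lti g h Gg Gh.
    by rewrite dM // (psiM pz) ?dK.
  by rewrite (nth_map (@chid gT)) // rM //; apply: cM; rewrite ?rH.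
- case=> [|i] /=; rewrite ?size_map => lti g Gg.
    by rewrite (psi_neq0 pz) ?dK.
  by rewrite (nth_map (@chid gT)) //; apply: cN; rewrite ?rH.
move=> g Gg H1.
have d1 : d g = 1%g.
  by apply: (psi_faith pz (dK _ Gg)); apply: (H1 0%N).
have r1 : r g = 1%g.
  apply: cF; first exact: rH.
  move=> i lti; have := H1 i.+1; rewrite /= size_map (nth_map (@chid gT)) //.
  by apply.
by rewrite (divgr_eq <[x]>%g H g) -/(d g) -/(r g) d1 r1 mulg1.
Qed.

Section Upper.
Variables (gT : finGroupType) (G : {group gT}) (cs : seq (gT -> CC)).
Hypothesis gc : goodchars G cs.
Local Notation n := (size cs).

Definition ent (g : gT) (i : nat) : CC := nth (@chid gT) (@chid gT :: cs) i g.
Definition urep (g : gT) : 'M[CC]_n.+1 := diag_mx (\row_(i < n.+1) ent g i).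

Lemma entM i g h : (i < n.+1)%N -> g \in G -> h \in G -> ent (g * h)%g i = ent g i * ent h i.
Proof.
case: gc => cM _ _; case: i => [|i] lt Gg Gh; first by rewrite /ent /= /chid mulr1.
by rewrite /ent /=; apply: cM.
Qed.

Lemma ent_neq0 i g : (i < n.+1)%N -> g \in G -> ent g i != 0.
Proof.
case: gc => _ cN _; case: i => [|i] lt Gg; first by rewrite /ent /= /chid oner_neq0.
by rewrite /ent /=; apply: cN.
Qed.

Lemma ent1 i : (i < n.+1)%N -> ent 1%g i = 1.
Proof.
move=> lt; have := entM lt (group1 G) (group1 G); rewrite mulg1 => e.
apply: (mulfI (ent_neq0 lt (group1 G))); by rewrite mulr1 -e.
Qed.

Lemma urep_proj : proj_rep G urep.
Proof.
exists (fun _ _ => 1); split.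
- rewrite /urep -diag_const_mx; congr diag_mx; apply/rowP => i; rewrite !mxE ent1 //.
- move=> g Gg; rewrite unitmxE det_diag unitfE; apply/prodf_neq0 => i _.
  by rewrite mxE ent_neq0.
- by move=> *; rewrite oner_neq0.
move=> g h Gg Gh; rewrite scale1r /urep mulmx_diag; congr diag_mx.
by apply/rowP => i; rewrite !mxE entM.
Qed.

Lemma urep_faith g : g \in G -> is_scalar_mx (urep g) -> g = 1%g.
Proof.
case: gc => _ _ cF Gg /is_scalar_mxP [a ea].
have ent_a (i : 'I_n.+1) : ent g i = a.
  by have := congr1 (fun M : 'M_n.+1 => M i i) ea; rewrite !mxE eqxx mulr1n.
apply: cF => // i lti.
have := ent_a (Ordinal (lti : (i.+1 < n.+1)%N)); rewrite /ent /= => ->.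
by have := ent_a ord0; rewrite /ent /= /chid.
Qed.

End Upper.

Close Scope ring_scope.

Theorem theorem4p10 (gT : finGroupType) (G : {group gT}) (n : nat) :
  abelian G -> ('m(G))%g = n -> ~ elementary_abelian G -> is_tau G n.+1.
Proof.
move=> cG mG nel.
have rG : ('r(G))%g = n by rewrite -grank_abelian.
split.
  have [b defG tb] := abelian_structure cG.
  have [cs [scs gc]] := chars_exist defG.
  have sc : size cs = n by rewrite scs -rG -(size_abelian_type cG) -tb size_map.
  rewrite -sc; exists (urep cs); split; first exact: urep_proj.
  exact: urep_faith.
move=> m [rho [prr Hf]].
case: m rho prr Hf => [|m] rho prr Hf.
  exfalso; apply: nel; exists 2%N; split => //.
  have -> : G :=: 1%g.
    apply/trivgP; apply/subsetP => g Gg; rewrite inE; apply/eqP; apply: (Hf g Gg).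
    by rewrite flatmx0 -(scale0r (1%:M : 'M[CC]_0)) scalemx1 scalar_mx_is_scalar.
  exact: abelem1.
have := claim (proj_rep_projrep prr) (ltn0Sn m) cG Hf.
case => [lt|[el _ _]]; last by [].
by rewrite -rG.
Qed.
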